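(* Let $A$ be a sesquiad. (a) The space $\operatorname{spec}_cA$ is irreducible if and only if $A^{\mathrm{red}}$ is integral. (b) The space $\operatorname{spec}_cA$ is sober, i.e. every non-empty irreducible closed subset has a unique generic point.
   Context: Monoids are commutative with $1$ and a zero $0$. A sesquiad is a monoid $A$ with an addition: partially defined sums $\sum_jk_ja_j$ coming from an injective monoid morphism $\varphi:A\to R$ into a commutative ring with $\varphi(0)=0$, defined exactly when $\sum_jk_j\varphi(a_j)\in\varphi(A)$. A congruence is an equivalence relation $\mathcal C$ on $A$ such that $A/\mathcal C$ admits an addition making $A\to A/\mathcal C$ a sesquiad morphism (the minimal such addition is used on $A/\mathcal C$). A sesquiad is integral if $1\ne0$ and $af=bf$ implies $a=b$ or $f=0$; a congruence is prime if $A/\mathcal C$ is integral. $\operatorname{spec}_cA$ is the set of prime congruences with topology generated by $D(a,b)=\{\mathcal C:(a,b)\notin\mathcal C\}$. $\operatorname{Nil}(A)=\bigcap_{E\in\operatorname{spec}_cA}E$ and $A^{\mathrm{red}}=A/\operatorname{Nil}(A)$. A space is irreducible if it is not the union of two proper closed subsets. *)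

(* Defs.v *)
From HB Require Import structures.
From mathcomp Require Import all_boot all_order all_algebra.
Set Implicit Arguments. Unset Strict Implicit. Unset Printing Implicit Defensive.
Import GRing.Theory.
Local Open Scope ring_scope.

(* A sesquiad: a commutative monoid with 1 and an absorbing 0, together with a
   partially defined addition.  [ssum l a] means: the formal sum
   sum_j k_j a_j (with l = [:: (k_1,a_1); ...]) is defined and equals a. *)
Record sesquiad := Sesquiad {
  carrier :> Type;
  smul : carrier -> carrier -> carrier;
  sone : carrier;
  szero : carrier;
  smulC : forall x y, smul x y = smul y x;
  smulA : forall x y z, smul x (smul y z) = smul (smul x y) z;
  smul1 : forall x, smul sone x = x;
  smul0 : forall x, smul szero x = szero;
  ssum : seq (int * carrier) -> carrier -> Prop;
  ssum_realized : exists (R : comPzRingType) (phi : carrier -> R),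
    injective phi /\ phi sone = 1 /\ phi szero = 0 /\
    (forall x y, phi (smul x y) = phi x * phi y) /\
    (forall l a, ssum l a <-> \sum_(p <- l) (phi p.2) *~ p.1 = phi a)
}.

Definition sesq_morphism (S T : sesquiad) (f : S -> T) : Prop :=
  f (sone S) = sone T /\ f (szero S) = szero T /\
  (forall x y, f (smul x y) = smul (f x) (f y)) /\
  (forall l a, ssum l a -> ssum [seq (p.1, f p.2) | p <- l] (f a)).

(* A congruence: an equivalence relation C such that the quotient A/C
   (represented by any surjection pi : A -> Q with kernel C) carries a
   sesquiad structure making the projection a sesquiad morphism. *)
Definition congruence (A : sesquiad) (C : A -> A -> Prop) : Prop :=
  (forall a, C a a) /\ (forall a b, C a b -> C b a) /\
  (forall a b c, C a b -> C b c -> C a c) /\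
  exists (Q : sesquiad) (pi : A -> Q),
    (forall q : Q, exists a, pi a = q) /\
    (forall a b, pi a = pi b <-> C a b) /\
    sesq_morphism pi.

Definition integral (S : sesquiad) : Prop :=
  sone S <> szero S /\
  forall a b f : S, smul a f = smul b f -> a = b \/ f = szero S.

(* integrality of the quotient monoid A/E, expressed on representatives *)
Definition quot_integral (A : sesquiad) (E : A -> A -> Prop) : Prop :=
  ~ E (sone A) (szero A) /\
  forall a b f : A, E (smul a f) (smul b f) -> E a b \/ E f (szero A).

Definition prime_congruence (A : sesquiad) (C : A -> A -> Prop) : Prop :=
  congruence C /\ quot_integral C.

Definition spec_c (A : sesquiad) := {E : A -> A -> Prop | prime_congruence E}.

Definition Dset (A : sesquiad) (a b : A) : spec_c A -> Prop :=
  fun E => ~ sval E a b.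

Inductive is_open (A : sesquiad) : (spec_c A -> Prop) -> Prop :=
| open_D (a b : A) : is_open (Dset a b)
| open_full : is_open (fun _ => True)
| open_inter U V : is_open U -> is_open V -> is_open (fun x => U x /\ V x)
| open_union (I : Type) (F : I -> spec_c A -> Prop) :
    (forall i, is_open (F i)) -> is_open (fun x => exists i, F i x)
| open_ext U V : is_open U -> (forall x, U x <-> V x) -> is_open V.

Definition is_closed (A : sesquiad) (Z : spec_c A -> Prop) : Prop :=
  is_open (fun x => ~ Z x).

Definition irreducible_sub (A : sesquiad) (Y : spec_c A -> Prop) : Prop :=
  (exists y, Y y) /\
  ~ (exists Z1 Z2 : spec_c A -> Prop,
       (exists F1, is_closed F1 /\ forall x, Z1 x <-> Y x /\ F1 x) /\
       (exists F2, is_closed F2 /\ forall x, Z2 x <-> Y x /\ F2 x) /\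
       (exists y, Y y /\ ~ Z1 y) /\ (exists y, Y y /\ ~ Z2 y) /\
       (forall x, Y x <-> Z1 x \/ Z2 x)).

Definition irreducible_space (A : sesquiad) : Prop :=
  irreducible_sub (fun _ : spec_c A => True).

Definition closure_pt (A : sesquiad) (x : spec_c A) : spec_c A -> Prop :=
  fun y => forall F, is_closed F -> F x -> F y.

Definition generic_point (A : sesquiad) (Z : spec_c A -> Prop) (x : spec_c A) :=
  forall y, Z y <-> closure_pt x y.

Definition sober (A : sesquiad) : Prop :=
  forall Z : spec_c A -> Prop, is_closed Z -> irreducible_sub Z ->
    exists x, generic_point Z x /\ forall y, generic_point Z y -> y = x.

(* Nil(A) = intersection of all prime congruences; A^red = A / Nil(A) *)
Definition NilRel (A : sesquiad) (a b : A) : Prop :=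
  forall E : spec_c A, sval E a b.

(* Main.v *)
Require Import Defs.
From HB Require Import structures.
From mathcomp Require Import all_boot all_order all_algebra.
From Stdlib Require Import ClassicalEpsilon FunctionalExtensionality ProofIrrelevance Classical PropExtensionality.
Set Implicit Arguments. Unset Strict Implicit. Unset Printing Implicit Defensive.
Import GRing.Theory.
Local Open Scope ring_scope.
Definition prodR (I : Type) (R : I -> comPzRingType) : Type := forall i, R i.

Definition peq I R (x y : @prodR I R) : bool :=
  if excluded_middle_informative (x = y) then true else false.
Lemma peqP I R : Equality.axiom (@peq I R).
Proof. move=> x y; rewrite /peq; case: excluded_middle_informative => h; constructor; done. Qed.
HB.instance Definition _ I R := hasDecEq.Build (@prodR I R) (@peqP I R).

Definition pfind I R (P : pred (@prodR I R)) (n : nat) : option (prodR R) :=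
  match excluded_middle_informative (exists x, P x) with
  | left h => Some (proj1_sig (constructive_indefinite_description _ h))
  | right _ => None end.
Lemma pfind1 I R P n x : @pfind I R P n = Some x -> P x.
Proof. rewrite /pfind; case: excluded_middle_informative => // h [<-].
by case: constructive_indefinite_description. Qed.
Lemma pfind2 I R (P : pred (@prodR I R)) : (exists x, P x) -> exists n, pfind P n.
Proof. move=> h; exists 0%N; rewrite /pfind; case: excluded_middle_informative => //. Qed.
Lemma pfind3 I R (P Q : pred (@prodR I R)) : P =1 Q -> pfind P =1 pfind Q.
Proof. move=> h; have -> : P = Q by apply: functional_extensionality. done. Qed.
HB.instance Definition _ I R := hasChoice.Build (@prodR I R) (@pfind1 I R) (@pfind2 I R) (@pfind3 I R).

Definition pzero I R : @prodR I R := fun i => 0.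
Definition popp I R (x : @prodR I R) : prodR R := fun i => - x i.
Definition padd I R (x y : @prodR I R) : prodR R := fun i => x i + y i.
Definition pone I R : @prodR I R := fun i => 1.
Definition pmul I R (x y : @prodR I R) : prodR R := fun i => x i * y i.
Lemma paddA I R : associative (@padd I R).
Proof. move=> x y z; apply: functional_extensionality_dep => i; exact: addrA. Qed.
Lemma paddC I R : commutative (@padd I R).
Proof. move=> x y; apply: functional_extensionality_dep => i; exact: addrC. Qed.
Lemma padd0 I R : left_id (@pzero I R) (@padd I R).
Proof. move=> x; apply: functional_extensionality_dep => i; exact: add0r. Qed.
Lemma paddN I R : left_inverse (@pzero I R) (@popp I R) (@padd I R).
Proof. move=> x; apply: functional_extensionality_dep => i; exact: addNr. Qed.
HB.instance Definition _ I R := GRing.isZmodule.Build (@prodR I R) (@paddA I R) (@paddC I R) (@padd0 I R) (@paddN I R).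
Lemma pmulA I R : associative (@pmul I R).
Proof. move=> x y z; apply: functional_extensionality_dep => i; exact: mulrA. Qed.
Lemma pmulC I R : commutative (@pmul I R).
Proof. move=> x y; apply: functional_extensionality_dep => i; exact: mulrC. Qed.
Lemma pmul1 I R : left_id (@pone I R) (@pmul I R).
Proof. move=> x; apply: functional_extensionality_dep => i; exact: mul1r. Qed.
Lemma pmulD I R : left_distributive (@pmul I R) (@GRing.add (@prodR I R)).
Proof. move=> x y z; apply: functional_extensionality_dep => i; exact: mulrDl. Qed.
HB.instance Definition _ I R := GRing.Zmodule_isComPzRing.Build (@prodR I R) (@pmulA I R) (@pmulC I R) (@pmul1 I R) (@pmulD I R).

Lemma prod_sum I R (T : Type) (l : seq T) (F : T -> @prodR I R) i :
  (\sum_(p <- l) F p) i = \sum_(p <- l) F p i.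
Proof. elim: l => [|p l IH]; first by rewrite !big_nil.
by rewrite !big_cons -IH. Qed.
Lemma prod_muln I R (x : @prodR I R) n i : (x *+ n) i = x i *+ n.
Proof. elim: n => [|n IH]; first by rewrite !mulr0n.
by rewrite !mulrS -IH. Qed.
Lemma prod_mulz I R (x : @prodR I R) k i : (x *~ k) i = x i *~ k.
Proof. case: k => n; first by rewrite -!pmulrn prod_muln.
rewrite NegzE !mulrNz -!pmulrn -prod_muln. by []. Qed.
Lemma prod_mul I R (x y : @prodR I R) i : (x * y) i = x i * y i. Proof. by []. Qed.
Lemma prod_one I R i : (1 : @prodR I R) i = 1. Proof. by []. Qed.
Lemma prod_zero I R i : (0 : @prodR I R) i = 0. Proof. by []. Qed.
Lemma sig_eq (T : Type) (P : T -> Prop) (x y : {r | P r}) : proj1_sig x = proj1_sig y -> x = y.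
Proof. case: x => x px; case: y => y py /= e; subst y. by rewrite (proof_irrelevance _ px py). Qed.

Definition QC (A : sesquiad) (S : comPzRingType) (Phi : A -> S) := {r : S | exists a, r = Phi a}.

Lemma QC_mulP (A : sesquiad) (S : comPzRingType) (Phi : A -> S)
  (Phim : forall x y, Phi (smul x y) = Phi x * Phi y) (x y : QC Phi) :
  exists c, proj1_sig x * proj1_sig y = Phi c.
Proof. case: x => r [a ea]; case: y => s [b eb] /=. exists (smul a b); by rewrite Phim ea eb. Qed.

Definition QC_mul (A : sesquiad) (S : comPzRingType) (Phi : A -> S) Phim (x y : QC Phi) : QC Phi :=
  exist _ (proj1_sig x * proj1_sig y) (@QC_mulP A S Phi Phim x y).
Definition QC_pi (A : sesquiad) (S : comPzRingType) (Phi : A -> S) (a : A) : QC Phi :=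
  exist _ (Phi a) (ex_intro _ a erefl).

Definition QC_sum (A : sesquiad) (S : comPzRingType) (Phi : A -> S) (l : seq (int * QC Phi)) (q : QC Phi) : Prop :=
  \sum_(p <- l) (proj1_sig p.2) *~ p.1 = proj1_sig q.


Lemma cong_of_map (A : sesquiad) (S : comPzRingType) (Phi : A -> S) :
  Phi (sone A) = 1 -> Phi (szero A) = 0 ->
  (forall x y, Phi (smul x y) = Phi x * Phi y) ->
  (forall l a, ssum l a -> \sum_(p <- l) (Phi p.2) *~ p.1 = Phi a) ->
  congruence (fun a b => Phi a = Phi b).
Proof.
move=> Phi1 Phi0 Phim Phis.
split; first by []. split; first by move=> ???. split; first by move=> ????; congruence.
pose mul := QC_mul Phim.
have mC : forall x y, mul x y = mul y x.
  by move=> x y; apply: sig_eq; rewrite /= mulrC.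
have mA : forall x y z, mul x (mul y z) = mul (mul x y) z.
  by move=> x y z; apply: sig_eq; rewrite /= mulrA.
have m1 : forall x, mul (QC_pi Phi (sone A)) x = x.
  by move=> x; apply: sig_eq; rewrite /= Phi1 mul1r.
have m0 : forall x, mul (QC_pi Phi (szero A)) x = QC_pi Phi (szero A).
  by move=> x; apply: sig_eq; rewrite /= Phi0 mul0r.
have real : exists (R : comPzRingType) (phi : QC Phi -> R),
    injective phi /\ phi (QC_pi Phi (sone A)) = 1 /\ phi (QC_pi Phi (szero A)) = 0 /\
    (forall x y, phi (mul x y) = phi x * phi y) /\
    (forall l a, QC_sum l a <-> \sum_(p <- l) (phi p.2) *~ p.1 = phi a).
  exists S, (fun x => proj1_sig x); split; first by move=> x y; apply: sig_eq.
  by split; first exact: Phi1; split; first exact: Phi0.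
exists (Sesquiad mC mA m1 m0 real), (QC_pi Phi).
split; first by move=> [r [a ea]]; exists a; apply: sig_eq; rewrite /= ea.
split; first by move=> a b; split => [e|e]; [exact: (f_equal (@proj1_sig _ _) e) | apply: sig_eq].
split; first by []. split; first by [].
split; first by move=> x y; apply: sig_eq; rewrite /= Phim.
move=> l a /Phis e; rewrite /= /QC_sum big_map /=; exact: e.
Qed.

Definition ring_rep (A : sesquiad) (C : A -> A -> Prop) (R : comPzRingType) (Phi : A -> R) :=
  Phi (sone A) = 1 /\ Phi (szero A) = 0 /\
  (forall x y, Phi (smul x y) = Phi x * Phi y) /\
  (forall l a, ssum l a -> \sum_(p <- l) (Phi p.2) *~ p.1 = Phi a) /\
  (forall a b, Phi a = Phi b <-> C a b).

Lemma cong_ring (A : sesquiad) (C : A -> A -> Prop) :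
  congruence C -> {R : comPzRingType & {Phi : A -> R | ring_rep C Phi}}.
Proof.
move=> [_ [_ [_ H]]].
case: (constructive_indefinite_description _ H) => Q H1.
case: (constructive_indefinite_description _ H1) => pi [pis [pie [p1 [p0 [pm ps]]]]].
case: (constructive_indefinite_description _ (ssum_realized Q)) => R H2.
case: (constructive_indefinite_description _ H2) => phi [phii [phi1 [phi0 [phim phis]]]].
exists R, (fun a => phi (pi a)).
split; first by rewrite p1.
split; first by rewrite p0.
split; first by move=> x y; rewrite pm phim.
split.
  move=> l a /ps /phis; by rewrite big_map.
move=> a b; rewrite -pie; split; [exact: phii | by move=> ->].
Qed.

Lemma cong_ext (A : sesquiad) (C C' : A -> A -> Prop) :
  congruence C -> (forall a b, C a b <-> C' a b) -> congruence C'.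
Proof.
move=> HC e.
have -> : C' = C; last by [].
apply: functional_extensionality => a; apply: functional_extensionality => b.
apply: propositional_extensionality; split; apply e.
Qed.

Lemma cong_inter (A : sesquiad) (I : Type) (C : I -> A -> A -> Prop) :
  (forall i, congruence (C i)) -> congruence (fun a b => forall i, C i a b).
Proof.
move=> H.
pose R i := projT1 (cong_ring (H i)).
pose Phi i : A -> R i := proj1_sig (projT2 (cong_ring (H i))).
have HP i : ring_rep (C i) (Phi i) := proj2_sig (projT2 (cong_ring (H i))).
pose Psi (a : A) : prodR R := fun i => Phi i a.
apply: (@cong_ext _ (fun a b => Psi a = Psi b)).
  apply: cong_of_map.
  - apply: functional_extensionality_dep => i; case: (HP i) => h _; exact: h.
  - apply: functional_extensionality_dep => i; case: (HP i) => _ [h _]; exact: h.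
  - move=> x y; apply: functional_extensionality_dep => i; rewrite prod_mul.
    case: (HP i) => _ [_ [h _]]; exact: h.
  - move=> l a hs; apply: functional_extensionality_dep => i.
    rewrite prod_sum; case: (HP i) => _ [_ [_ [hsum _]]].
    have -> : Psi a i = Phi i a by [].
    rewrite -(hsum _ _ hs); apply: eq_bigr => p _; by rewrite prod_mulz.
move=> a b; split.
  move=> e i; case: (HP i) => _ [_ [_ [_ he]]]; apply/he.
  exact: (f_equal (fun f => f i) e).
move=> h; apply: functional_extensionality_dep => i.
case: (HP i) => _ [_ [_ [_ he]]]; apply/he; exact: h.
Qed.
Local Close Scope ring_scope.

Fixpoint inD (A : sesquiad) (E : A -> A -> Prop) (l : seq (A * A)) : Prop :=
  match l with [::] => True | p :: l => ~ E p.1 p.2 /\ inD E l end.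

Lemma inD_cat (A : sesquiad) (E : A -> A -> Prop) l1 l2 : inD E (l1 ++ l2) <-> inD E l1 /\ inD E l2.
Proof. elim: l1 => [|p l IH] /=; first tauto. rewrite IH; tauto. Qed.

Lemma inD_mono (A : sesquiad) (E E' : A -> A -> Prop) l :
  (forall a b, E a b -> E' a b) -> inD E' l -> inD E l.
Proof. move=> h; elim: l => [|p l IH] //= [h1 h2]; split; last exact: IH.
move=> e; apply: h1; exact: h. Qed.

Lemma open_basic (A : sesquiad) (U : spec_c A -> Prop) : is_open U ->
  forall x, U x -> exists l, inD (sval x) l /\ forall y, inD (sval y) l -> U y.
Proof.
elim.
- move=> a b x hx; exists [:: (a, b)] => /=; split; first by [].
  by move=> y [].
- move=> x _; exists [::]; by [].
- move=> U1 U2 _ IH1 _ IH2 x [h1 h2].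
  case: (IH1 x h1) => l1 [i1 f1]; case: (IH2 x h2) => l2 [i2 f2].
  exists (l1 ++ l2); split; first by apply/inD_cat.
  move=> y /inD_cat [j1 j2]; split; [exact: f1 | exact: f2].
- move=> J F _ IH x [i hi]; case: (IH i x hi) => l [h1 h2].
  exists l; split => // y hy; exists i; exact: h2.
- move=> U1 U2 _ IH e x /e hx; case: (IH x hx) => l [h1 h2].
  exists l; split => // y hy; apply/e; exact: h2.
Qed.

Lemma inD_open (A : sesquiad) (l : seq (A * A)) : is_open (fun y : spec_c A => inD (sval y) l).
Proof.
elim: l => [|p l IH] /=.
  apply: (open_ext (@open_full A)); by [].
apply: (open_ext (open_inter (open_D p.1 p.2) IH)); by [].
Qed.

Lemma closedV (A : sesquiad) (a b : A) : is_closed (fun x : spec_c A => sval x a b).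
Proof. exact: (open_D a b). Qed.

Lemma closure_up (A : sesquiad) (x y : spec_c A) :
  (forall a b, sval x a b -> sval y a b) -> closure_pt x y.
Proof.
move=> h F cF Fx; apply: NNPP => nFy.
case: (open_basic cF nFy) => l [hy hl].
apply: (hl x) => //; exact: (inD_mono h hy).
Qed.

Lemma closure_down (A : sesquiad) (x y : spec_c A) :
  closure_pt x y -> forall a b, sval x a b -> sval y a b.
Proof. move=> h a b; exact: (h _ (closedV a b)). Qed.

Lemma prime_one (A : sesquiad) (E : spec_c A) : ~ sval E (sone A) (szero A).
Proof. by case: (proj2 (svalP E)). Qed.
Lemma prime_int (A : sesquiad) (E : spec_c A) (a b f : A) :
  sval E (smul a f) (smul b f) -> sval E a b \/ sval E f (szero A).
Proof. by case: (proj2 (svalP E)) => _ h; apply: h. Qed.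

Theorem mainTheorem11 (A : sesquiad) :
  (irreducible_space A <-> quot_integral (@NilRel A)) /\ sober A.
Proof.
split; [split|].
- move=> [[y _] nodec]; split.
    move=> h; exact: (prime_one (h y)).
  move=> a b f h; apply: NNPP => hn; apply: nodec.
  case: (not_or_and _ _ hn) => /not_all_ex_not [e1 he1] /not_all_ex_not [e2 he2].
  exists (fun x => sval x a b), (fun x => sval x f (szero A)).
  split; first by exists (fun x => sval x a b); split; [exact: closedV | tauto].
  split; first by exists (fun x => sval x f (szero A)); split; [exact: closedV | tauto].
  split; first by exists e1.
  split; first by exists e2.
  move=> x; split => // _; exact: prime_int (h x).
- move=> hq.
  have hc : congruence (@NilRel A).
    exact: (@cong_inter A (spec_c A) (fun E => sval E) (fun E => proj1 (svalP E))).
  pose eta : spec_c A := exist _ (@NilRel A) (conj hc hq).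
  split; first by exists eta.
  move=> [Z1 [Z2 [[F1 [cF1 eZ1]] [[F2 [cF2 eZ2]] [[y1 [_ ny1]] [[y2 [_ ny2]] cov]]]]]].
  have up y : closure_pt eta y by apply: closure_up => a b h; exact: h y.
  case: ((proj1 (cov eta)) I) => [/(proj1 (eZ1 _)) [_ hF] | /(proj1 (eZ2 _)) [_ hF]].
    apply: ny1; apply/(proj2 (eZ1 _)); split => //; exact: (up y1 F1 cF1 hF).
  apply: ny2; apply/(proj2 (eZ2 _)); split => //; exact: (up y2 F2 cF2 hF).
- move=> Z cZ [[y0 Zy0] nodec].
  pose N := fun a b => forall i : {y | Z y}, sval (sval i) a b.
  have hc : congruence N.
    exact: (@cong_inter A {y | Z y} (fun i => sval (sval i)) (fun i => proj1 (svalP (sval i)))).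
  have hq : quot_integral N.
    split.
      move=> h; exact: (prime_one (h (exist _ y0 Zy0))).
    move=> a b f h; apply: NNPP => hn; apply: nodec.
    case: (not_or_and _ _ hn) => /not_all_ex_not [i1 he1] /not_all_ex_not [i2 he2].
    exists (fun x => Z x /\ sval x a b), (fun x => Z x /\ sval x f (szero A)).
    split; first by exists (fun x => sval x a b); split; [exact: closedV | tauto].
    split; first by exists (fun x => sval x f (szero A)); split; [exact: closedV | tauto].
    split; first by exists (sval i1); split; [exact: (svalP i1) | tauto].
    split; first by exists (sval i2); split; [exact: (svalP i2) | tauto].
    move=> x; split; last tauto.
    move=> Zx; case: (prime_int (h (exist _ x Zx))) => hh; [left|right]; by split.
  pose eta : spec_c A := exist _ N (conj hc hq).
  have claim : forall l, inD N l -> exists y, Z y /\ inD (sval y) l.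
    elim => [|p l IH] /=; first by exists y0.
    move=> [hp hl]; case: (IH hl) => y' [Zy' iy'].
    case: (not_all_ex_not _ _ hp) => i hi.
    apply: NNPP => hno; apply: nodec.
    exists (fun x => Z x /\ ~ inD (sval x) l), (fun x => Z x /\ sval x p.1 p.2).
    split.
      exists (fun x => ~ inD (sval x) l); split; last tauto.
      apply: (open_ext (inD_open l)) => x; split; [tauto | exact: NNPP].
    split; first by exists (fun x => sval x p.1 p.2); split; [exact: closedV | tauto].
    split; first by exists y'; tauto.
    split; first by exists (sval i); split; [exact: (svalP i) | tauto].
    move=> x; split; last tauto.
    move=> Zx; case: (classic (inD (sval x) l)) => hin; last by left.
    case: (classic (sval x p.1 p.2)) => hs; first by right.
    exfalso; apply: hno; exists x; tauto.
  have Zeta : Z eta.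
    apply: NNPP => hz; case: (open_basic cZ hz) => l [hl hl2].
    case: (claim l hl) => y [Zy iy]; exact: (hl2 y iy).
  have gen : generic_point Z eta.
    move=> y; split.
      move=> Zy; apply: closure_up => a b h; exact: (h (exist _ y Zy)).
    move=> h; exact: (h Z cZ Zeta).
  exists eta; split => // y gy.
  have Zy : Z y by apply/gy => F _.
  have h1 := closure_down (proj1 (gen y) Zy).
  have h2 := closure_down (proj1 (gy eta) Zeta).
  apply: sig_eq => /=.
  apply: functional_extensionality => a; apply: functional_extensionality => b.
  apply: propositional_extensionality; split; [exact: h2 | exact: h1].
Qed.
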